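(* Let $Z$ be a unit Fréchet random variable, i.e. $\Pr(Z \le z) = \exp(-1/z)$ for $z > 0$. Let $\mathbf A = (A_1, \ldots, A_d)$ be a random vector in $\mathbb R^d$, independent of $Z$, such that $0 < \mathbb E[\max(A_j, 0)] < \infty$ for every $j \in \{1, \ldots, d\}$. Put $\mathbf X = (X_1, \ldots, X_d) = (A_1 Z, \ldots, A_d Z)$. Then for every $\mathbf x = (x_1, \ldots, x_d) \in (0, \infty)^d$, \[ \lim_{n \to \infty} \Pr[ X_1 \le n x_1, \ldots, X_d \le n x_d ]^n = \exp\bigl\{ - \mathbb E[ \max(A_1/x_1, \ldots, A_d/x_d, 0) ] \bigr\}. \] *)

(* Defs.v *)
From HB Require Import structures.
From mathcomp Require Import all_boot all_order all_algebra.
From mathcomp Require Import all_classical all_reals all_analysis.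
Set Implicit Arguments. Unset Strict Implicit. Unset Printing Implicit Defensive.
Import Order.TTheory GRing.Theory Num.Theory.
Import numFieldNormedType.Exports.
Local Open Scope classical_set_scope.
Local Open Scope ring_scope.

(* Independence of the real random variable Z and the random vector
   A = (A_j)_{j < m}: product rule on the generating pi-system of
   "rectangles" {Z in B} /\ {A_j in C_j for all j}, with B, C_j Borel. *)
Definition indep_rv_vec {d : measure_display} {T : measurableType d}
  {R : realType} (P : probability T R) (Z : T -> R) (m : nat)
  (A : 'I_m -> T -> R) : Prop :=
  forall (B : set R) (C : 'I_m -> set R),
    measurable B -> (forall j, measurable (C j)) ->
    P (Z @^-1` B `&` \bigcap_(j in [set: 'I_m]) (A j @^-1` C j))
    = (P (Z @^-1` B) * P (\bigcap_(j in [set: 'I_m]) (A j @^-1` C j)))%E.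

Definition unit_frechet {d : measure_display} {T : measurableType d}
  {R : realType} (P : probability T R) (Z : T -> R) : Prop :=
  forall z : R, 0 < z -> P (Z @^-1` `]-oo, z]) = (expR (- z^-1))%:E.

(* Main.v *)
Require Import Defs.
From HB Require Import structures.
From mathcomp Require Import all_boot all_order all_algebra.
From mathcomp Require Import all_classical all_reals all_analysis measurable_realfun.
From mathcomp Require Import lra ring.
Import Order.TTheory GRing.Theory Num.Theory.
Import numFieldNormedType.Exports.
Local Open Scope classical_set_scope.
Local Open Scope ring_scope.


Lemma mbigmax d (T : measurableType d) (R : realType) (I : Type) (s : seq I)
  (F : I -> T -> R) : (forall i, measurable_fun setT (F i)) ->
  measurable_fun setT (fun t => \big[Num.max/0]_(i <- s) F i t).
Proof.
move=> mF; elim: s => [|i s ih].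
  under eq_fun do rewrite big_nil; exact: measurable_cst.
under eq_fun do rewrite big_cons; exact: measurable_maxr.
Qed.

Lemma bigmax_ge0' (R : realType) (I : Type) (s : seq I) (F : I -> R) :
  0 <= \big[Num.max/0]_(i <- s) F i.
Proof.
elim: s => [|i s ih]; first by rewrite big_nil.
by rewrite big_cons le_max ih orbT.
Qed.

Lemma bigmax_le_sum (R : realType) (I : Type) (s : seq I) (F : I -> R) :
  \big[Num.max/0]_(i <- s) F i <= \sum_(i <- s) Num.max (F i) 0.
Proof.
pose K := fun a b : R => a <= b /\ 0 <= b.
suff [] : K (\big[Num.max/0]_(i <- s) F i) (\sum_(i <- s) Num.max (F i) 0) by [].
apply: (big_ind2 K) => //.
- move=> a b c e [h1 h2] [h3 h4]; split; last lra.
  rewrite ge_max; apply/andP; split; lra.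
- move=> i _; split; first by rewrite le_max lexx.
  by rewrite le_max lexx orbT.
Qed.

Definition Gc (R : realType) : set (set R) := [set A | exists x, A = `]-oo, x]%classic].

Lemma measurableE_c (R : realType) : @measurable _ R = <<s Gc R >>.
Proof.
rewrite eqEsubset; split => A.
  apply: smallest_sub; first exact: smallest_sigma_algebra.
  move=> I [[a b] _ <-] /=.
  have -> : `]a, b]%classic = `]-oo, b]%classic `\` `]-oo, a]%classic.
    apply/seteqP; split => x /=; rewrite !in_itv /= ?andbT.
      by move=> /andP[h1 h2]; split => //; apply/negP; rewrite -ltNge.
    by move=> [h1 /negP h2]; rewrite h1 andbT ltNge.
  by apply: (@measurableD _ (g_sigma_algebraType (Gc R))); apply: sub_sigma_algebra;
    eexists; reflexivity.
apply: smallest_sub; first exact: smallest_sigma_algebra.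
by move=> A' /= [x ->]; exact: measurable_itv.
Qed.

Lemma indep_ext d (T : measurableType d) (R : realType) (P : probability T R)
  (Z M : T -> R) (mZ : measurable_fun setT Z) (mM : measurable_fun setT M) :
  (forall B c, measurable B ->
     P (Z @^-1` B `&` M @^-1` `]-oo, c]) = (P (Z @^-1` B) * P (M @^-1` `]-oo, c]))%E) ->
  forall B C, measurable B -> measurable C ->
  P (Z @^-1` B `&` M @^-1` C) = (P (Z @^-1` B) * P (M @^-1` C))%E.
Proof.
move=> H B C mB mC.
have mZB : measurable (Z @^-1` B) by rewrite -[_ @^-1` _]setTI; exact: mZ.
have mMS S : measurable S -> measurable (M @^-1` S).
  by move=> mS; rewrite -[_ @^-1` _]setTI; exact: mM.
have ZBE : P (Z @^-1` B) = (fine (P (Z @^-1` B)))%:E.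
  by rewrite fineK// fin_num_measure.
apply: (dynkin_induction (G := Gc R)
  (P := fun S => P (Z @^-1` B `&` M @^-1` S) = (P (Z @^-1` B) * P (M @^-1` S))%E)).
- exact: measurableE_c.
- move=> X Y [a ->] [b ->]; exists (Num.min a b).
  apply/seteqP; split => x /=; rewrite !in_itv /= ?andbT.
    by move=> [h1 h2]; rewrite le_min h1 h2.
  by rewrite le_min => /andP[].
- by rewrite preimage_setT setIT probability_setT mule1.
- by move=> X [c ->]; exact: H.
- move=> S mS hS.
  have mMs := mMS _ mS.
  have -> : M @^-1` (~` S) = ~` (M @^-1` S) by [].
  rewrite -setDE measureD//; last first.
    by rewrite (le_lt_trans (probability_le1 _ _)) ?ltry.
  rewrite probability_setC// muleBr ?mule1//; last by rewrite fin_num_measure.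
  by congr (_ - _)%E; exact: hS.
- move=> F mF tF hF.
  have t1 : trivIset [set: nat] (fun n => Z @^-1` B `&` M @^-1` F n).
    apply/trivIsetP => i j _ _ ij.
    move/trivIsetP : tF => /(_ i j I I ij) h.
    by rewrite setIACA setIid -preimage_setI h preimage_set0 !setI0.
  have t2 : trivIset [set: nat] (fun n => M @^-1` F n).
    apply/trivIsetP => i j _ _ ij.
    move/trivIsetP : tF => /(_ i j I I ij) h.
    by rewrite -preimage_setI h preimage_set0.
  rewrite preimage_bigcup setI_bigcupr.
  rewrite measure_bigcup//; last first.
    by move=> i _; apply: measurableI => //; exact: mMS.
  rewrite measure_bigcup//; last first.
    by move=> i _; exact: mMS.
  transitivity (\sum_(0 <= i <oo | i \in [set: nat])
     (P (Z @^-1` B) * P (M @^-1` F i)))%E.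
    by apply: eq_eseriesr => n _; exact: hF.
  by rewrite ZBE nneseriesZl.
- by rewrite -measurableE_c.
Qed.

Lemma prod_eq d (T : measurableType d) (R : realType) (P : probability T R)
  (M Z : {mfun T >-> R}) (Phi : {mfun T >-> (R * R)%type})
  (hPhi : forall t, Phi t = (M t, Z t)) :
  (forall B C, measurable B -> measurable C ->
     P (Z @^-1` B `&` M @^-1` C) = (P (Z @^-1` B) * P (M @^-1` C))%E) ->
  forall S, measurable S ->
  P (Phi @^-1` S) = (distribution P M \x distribution P Z)%E S.
Proof.
move=> H S mS.
apply: (measure_unique [set A `*` B | A in measurable & B in measurable]
   (fun _ => setT) _ _ _ _ (distribution P Phi)) => //.
- exact: measurable_prod_measurableType.
- move=> X Y [A mA [B mB <-]] [A' mA' [B' mB' <-]].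
  exists (A `&` A'); first exact: measurableI.
  by exists (B `&` B'); [exact: measurableI|rewrite setXI].
- by move=> _; exists setT => //; exists setT => //; rewrite setXTT.
- by rewrite bigcup_const.
- move=> X [A mA [B mB <-]].
  transitivity (distribution P M A * distribution P Z B)%E; last first.
    exact: (esym (product_measure1E _ _ mA mB)).
  rewrite /distribution /pushforward.
  have E : Phi @^-1` (A `*` B) = Z @^-1` B `&` M @^-1` A.
    by apply/seteqP; split => t /=; rewrite hPhi /= => -[].
  transitivity (P (Z @^-1` B `&` M @^-1` A)); first by rewrite -E.
  by rewrite H// muleC.
- by move=> _; rewrite /distribution /pushforward (le_lt_trans (probability_le1 _ _)) ?ltry.
Qed.

Lemma prod_S d (T : measurableType d) (R : realType) (P : probability T R)
  (M Z : {mfun T >-> R}) (c : R) (hc : 0 < c) (hM : forall t, 0 <= M t)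
  (hZ : forall z : R, 0 < z -> P (Z @^-1` `]-oo, z]) = (expR (- z^-1))%:E) :
  (distribution P M \x distribution P Z)%E [set p | p.2 * p.1 <= c]
  = (\int[P]_t (expR (- M t / c))%:E)%E.
Proof.
have mf : measurable_fun setT (fun p : R * R => p.2 * p.1).
  by apply: measurable_funM; [exact: measurable_snd|exact: measurable_fst].
have mS : measurable [set p : R * R | p.2 * p.1 <= c].
  have -> : [set p : R * R | p.2 * p.1 <= c] =
      setT `&` (fun p : R * R => p.2 * p.1) @^-1` `]-oo, c].
    by rewrite setTI; apply/seteqP; split => p /=; rewrite in_itv /=.
  by apply: mf => //; exact: measurable_itv.
rewrite /product_measure1 /=.
rewrite ge0_integral_pushforward //; last exact: measurable_fun_xsection.
rewrite preimage_setT; apply: eq_integral => t _ /=.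
rewrite /distribution /pushforward.
have [M0|Mpos] := eqVneq (M t) 0.
  rewrite M0 oppr0 mul0r expR0.
  have -> : Z @^-1` xsection [set p : R * R | p.2 * p.1 <= c] 0 = setT.
    by apply/seteqP; split => z //= _; rewrite /xsection /= inE /= mulr0 ltW.
  by rewrite probability_setT.
have Mp : 0 < M t by rewrite lt_neqAle eq_sym Mpos hM.
have -> : Z @^-1` xsection [set p : R * R | p.2 * p.1 <= c] (M t) =
    Z @^-1` `]-oo, c / M t].
  apply/seteqP; split => z /=; rewrite /xsection /= inE /= in_itv /=;
  by rewrite ler_pdivlMr.
by rewrite hZ ?divr_gt0// invf_div mulNr.
Qed.

Lemma inv_cvg0 (R : realType) : (fun n : nat => (n%:R : R)^-1) @ \oo --> 0.
Proof. by rewrite -cvg_shiftS; exact: cvg_harmonic. Qed.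

Lemma bnd_up (R : realType) (y : R) (n : nat) : 0 <= y ->
  0 <= n%:R * (1 - expR (- y / n%:R)) <= y.
Proof.
move=> y0; have [->|n0] := eqVneq n 0%N; first by rewrite mul0r lexx y0.
have np : 0 < (n%:R : R) by rewrite ltr0n lt0n.
have u0 : 0 <= y / n%:R by rewrite divr_ge0// ltW.
apply/andP; split.
  by rewrite mulr_ge0 ?ler0n// subr_ge0 expR_le1 mulNr oppr_le0.
have h := expR_ge1Dx (- y / n%:R).
have e : n%:R * (y / n%:R) = y by rewrite mulrC divfK// gt_eqF.
by rewrite -[leRHS]e ler_wpM2l ?ler0n//; rewrite mulNr in h *; lra.
Qed.

Lemma bnd_low (R : realType) (y : R) (n : nat) : 0 <= y -> (0 < n)%N ->
  y - y ^+ 2 / n%:R <= n%:R * (1 - expR (- y / n%:R)).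
Proof.
move=> y0 n0.
have np : 0 < (n%:R : R) by rewrite ltr0n.
set u := y / n%:R.
have u0 : 0 <= u by rewrite divr_ge0// ltW.
have e1 : expR (- u) <= 1 - u + u ^+ 2.
  rewrite expRN.
  have h1 : (expR u)^-1 <= (1 + u)^-1.
    by rewrite lef_pV2 ?posrE ?expR_gt0 ?expR_ge1Dx//; lra.
  apply: (le_trans h1).
  rewrite -[(1 + u)^-1]mul1r ler_pdivrMr; last lra.
  have : 0 <= u ^+ 3 by rewrite exprn_ge0.
  rewrite !exprS expr0 !mulr1; nra.
have -> : y - y ^+ 2 / n%:R = n%:R * (u - u ^+ 2).
  by rewrite /u; field; rewrite gt_eqF.
rewrite ler_wpM2l ?ler0n// mulNr.
lra.
Qed.

Lemma pt_cvg (R : realType) (y : R) : 0 <= y ->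
  (fun n : nat => n%:R * (1 - expR (- y / n%:R))) @ \oo --> y.
Proof.
move=> y0.
apply: (@squeeze_cvgr _ _ _ _ (fun n : nat => y - y ^+ 2 * (n%:R : R)^-1) (fun _ => y)).
- near=> n; apply/andP; split.
    by apply: bnd_low => //; near: n; exists 1%N.
  by case/andP: (@bnd_up R y n y0).
- have h : (fun n : nat => y - y ^+ 2 * (n%:R : R)^-1) @ \oo --> y - y ^+ 2 * 0.
    exact: cvgB (cvg_cst _) (cvgM (cvg_cst _) (@inv_cvg0 R)).
  by rewrite mulr0 subr0 in h.
- exact: cvg_cst.
Unshelve. all: by end_near.
Qed.

Lemma dct_part d (T : measurableType d) (R : realType) (P : probability T R)
  (Mp : T -> R) (mM : measurable_fun setT Mp) (hM0 : forall t, 0 <= Mp t)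
  (iM : P.-integrable setT (EFin \o Mp)) :
  (fun n : nat => n%:R * (1 - Rintegral P setT (fun t => expR (- Mp t / n%:R))))
    @ \oo --> Rintegral P setT Mp.
Proof.
pose f_ (n : nat) t := (n%:R * (1 - expR (- Mp t / n%:R)))%:E.
have me (n : nat) : measurable_fun setT (fun t => expR (- Mp t / n%:R)).
  apply: (measurableT_comp (@measurable_expR R)).
  by apply: measurable_funM; [exact: measurable_funN|exact: measurable_cst].
have ie (n : nat) : P.-integrable setT (EFin \o (fun t => expR (- Mp t / n%:R))).
  apply: (@le_integrable _ _ _ P setT measurableT _ (EFin \o cst 1)); last first.
    exact: finite_measure_integrable_cst.
    move=> t _ /=; rewrite lee_fin !ger0_norm ?expR_ge0 ?ler01//.
    by rewrite expR_le1 mulNr oppr_le0 divr_ge0.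
  by apply/measurable_EFinP; exact: me.
have i1 : P.-integrable setT (EFin \o (fun _ : T => (1 : R))).
  exact: finite_measure_integrable_cst.
have mf_ n : measurable_fun setT (f_ n).
  apply/measurable_EFinP; apply: measurable_funM => //.
  by apply: measurable_funB => //; exact: me.
have f_f t : setT t -> f_ ^~ t @ \oo --> (EFin \o Mp) t.
  move=> _; apply: cvg_EFin; first by near=> n.
  exact: pt_cvg.
have fing t : setT t -> (EFin \o Mp) t \is a fin_num by [].
have absfg n t : setT t -> (`|f_ n t| <= (EFin \o Mp) t)%E.
  move=> _; have /andP[h1 h2] := @bnd_up R (Mp t) n (hM0 t).
  by rewrite /f_ gee0_abs ?lee_fin.
have hD := @dominated_cvg d T R P setT measurableT f_ (EFin \o Mp) (EFin \o Mp)
  mf_ f_f fing iM absfg.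
have hfin := integrable_fin_num measurableT iM.
rewrite -(fineK hfin) in hD.
have h2 := fine_cvg hD.
apply: (@cvg_trans _ ((fine \o (fun n => \int[P]_(x in setT) f_ n x)%E) @ \oo)); last exact: h2.
apply: near_eq_cvg; near=> n => /=.
rewrite /f_ -/(Rintegral P setT (fun t => n%:R * (1 - expR (- Mp t / n%:R)))).
rewrite RintegralZl//; last first.
  apply: (eq_integrable measurableT _ _ _ (@integrableB _ _ _ P setT measurableT _ _ i1 (ie n))).
  by move=> t _ /=; rewrite EFinB.
rewrite RintegralB// Rintegral_cst//.
rewrite (_ : fine _ = 1) ?mul1r//; exact: (congr1 fine (probability_setT P)).
Unshelve. all: by end_near.
Qed.
Lemma limit_part (R : realType) (p : nat -> R) (L : R) :
  (fun n => n%:R * (1 - p n)) @ \oo --> L ->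
  (fun n => p n ^+ n) @ \oo --> expR (- L).
Proof.
move=> hL.
have hq : (fun n => 1 - p n) @ \oo --> 0.
  have h2 := cvgM hL (@inv_cvg0 R); rewrite mulr0 in h2.
  apply: (@cvg_trans _ (((fun n => n%:R * (1 - p n)) \* (fun n : nat => (n%:R : R)^-1)) @ \oo)); last exact: h2.
  apply: near_eq_cvg; near=> n => /=.
  by rewrite mulrAC mulfV ?mul1r// pnatr_eq0 -lt0n; near: n; exists 1%N.
have hp : p n @[n --> \oo] --> (1 : R).
  have h3 : (fun n => 1 - (1 - p n)) @ \oo --> (1 : R) - 0 := cvgB (cvg_cst _) hq.
  rewrite subr0 in h3.
  apply: (@cvg_trans _ ((fun n => 1 - (1 - p n)) @ \oo)); last exact: h3.
  apply: near_eq_cvg; near=> n => /=.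
  by rewrite opprB addrCA subrr addr0.
have hpos : \forall n \near \oo, 0 < p n by apply: (cvgr_gt 1) => //.
apply: (@squeeze_cvgr _ _ _ _
   (fun n => expR (- (n%:R * (1 - p n)) / p n))
   (fun n => expR (- (n%:R * (1 - p n))))).
- near=> n.
  have p0 : 0 < p n by near: n.
  apply/andP; split.
    have -> : - (n%:R * (1 - p n)) / p n = n%:R * (1 - (p n)^-1).
      by field; rewrite gt_eqF.
    rewrite expRM_natl; apply: lerXn2r; [by rewrite nnegrE expR_ge0|by rewrite nnegrE ltW|].
    have -> : 1 - (p n)^-1 = - ((p n)^-1 - 1) by ring.
    rewrite expRN -[X in _ <= X]invrK lef_pV2 ?posrE ?expR_gt0 ?invr_gt0//.
    by rewrite (le_trans _ (expR_ge1Dx _))// addrCA subrr addr0.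
  have -> : - (n%:R * (1 - p n)) = n%:R * (p n - 1) by ring.
  rewrite expRM_natl; apply: lerXn2r; [by rewrite nnegrE ltW|by rewrite nnegrE expR_ge0|].
  by rewrite (le_trans _ (expR_ge1Dx _))// addrCA subrr addr0.
- have h4 : (fun n => - (n%:R * (1 - p n)) / p n) @ \oo --> - L * 1^-1.
    exact: cvgM (cvgN hL) (cvgV (oner_neq0 R) hp).
  rewrite invr1 mulr1 in h4.
  exact: (continuous_cvg _ (@continuous_expR R (-L)) h4).
- have h4 : (fun n => - (n%:R * (1 - p n))) @ \oo --> - L.
    exact: cvgN hL.
  exact: (continuous_cvg _ (@continuous_expR R (-L)) h4).
Unshelve. all: by end_near.
Qed.


Theorem mainTheorem1 (d : measure_display) (T : measurableType d)
  (R : realType) (P : probability T R) (m : nat)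
  (Z : T -> R) (A : 'I_m -> T -> R)
  (mZ : measurable_fun setT Z) (mA : forall j, measurable_fun setT (A j))
  (hZ : unit_frechet P Z) (hind : indep_rv_vec P Z A)
  (hApos : forall j, (0 < \int[P]_t (Num.max (A j t) 0)%:E)%E)
  (hAfin : forall j, (\int[P]_t (Num.max (A j t) 0)%:E < +oo)%E)
  (x : 'I_m -> R) (hx : forall j, 0 < x j) :
  (fun n : nat =>
     fine (P [set t | forall j, A j t * Z t <= n%:R * x j]) ^+ n)
    @ \oo -->
  expR (- fine (\int[P]_t (\big[Num.max/0]_(j < m) (A j t / x j))%:E)).
Proof.
have mZc (c : R) : measurable (Z @^-1` `]-oo, c]).
  by rewrite -[_ @^-1` _]setTI; exact: mZ.
pose Mp t := \big[Num.max/0]_(j < m) (A j t / x j).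
have mMp : measurable_fun setT Mp.
  by apply: mbigmax => j; apply: measurable_funM => //; exact: measurable_cst.
have hM0 t : 0 <= Mp t by exact: bigmax_ge0'.
have iM : P.-integrable setT (EFin \o Mp).
  have xi j : 0 < (x j)^-1 by rewrite invr_gt0.
  have mx0 (a : R) : 0 <= Num.max a 0 by rewrite le_max lexx orbT.
  apply: (@le_integrable _ _ _ P setT measurableT _
     (fun t => \sum_(j < m) (((x j)^-1)%:E * (Num.max (A j t) 0)%:E))%E).
  - by apply/measurable_EFinP.
  - move=> t _ /=.
    under eq_bigr do rewrite -EFinM.
    rewrite sumEFin.
    rewrite !abse_EFin lee_fin.
    rewrite (ger0_norm (hM0 t)) ger0_norm; last first.
      by apply: sumr_ge0 => j _; apply: mulr_ge0; [exact: ltW|exact: mx0].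
    apply: (le_trans (bigmax_le_sum _ _ _ _)).
    apply: ler_sum => j _.
    rewrite ge_max; apply/andP; split; last by apply: mulr_ge0; [exact: ltW|exact: mx0].
    by rewrite [_ * Num.max _ _]mulrC ler_pM2r ?le_max ?lexx.
  - apply: integrable_sum => //= j _.
    apply: integrableZl => //.
    apply/integrableP; split.
      by apply/measurable_EFinP; apply: measurable_maxr => //; exact: measurable_cst.
    by under eq_integral do rewrite gee0_abs ?lee_fin//.
pose Zf : {mfun T >-> R} :=
  MeasurableFun.Pack (MeasurableFun.Class (isMeasurableFun.Build _ _ _ _ _ mZ)).
pose Mf : {mfun T >-> R} :=
  MeasurableFun.Pack (MeasurableFun.Class (isMeasurableFun.Build _ _ _ _ _ mMp)).
have mPhi : measurable_fun setT (fun t => (Mp t, Z t)) := measurable_fun_pair mMp mZ.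
pose Phif : {mfun T >-> (R * R)%type} :=
  MeasurableFun.Pack (MeasurableFun.Class (isMeasurableFun.Build _ _ _ _ _ mPhi)).
have hindc : forall B c, measurable B ->
    P (Z @^-1` B `&` Mp @^-1` `]-oo, c]) = (P (Z @^-1` B) * P (Mp @^-1` `]-oo, c]))%E.
  move=> B c mB.
  have [c0|c0] := ltP c 0.
    have -> : Mp @^-1` `]-oo, c] = set0.
      apply/seteqP; split => t //=; rewrite in_itv /= => h.
      have := hM0 t; lra.
    by rewrite setI0 !measure0 mule0.
  have -> : Mp @^-1` `]-oo, c] =
      \bigcap_(j in [set: 'I_m]) (A j @^-1` `]-oo, c * x j]).
    apply/seteqP; split => t /=; rewrite in_itv /=.
      move/bigmax_leP => [_ h] j _ /=; rewrite in_itv /= -ler_pdivrMr //; exact: h.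
    move=> h; apply/bigmax_leP; split => // j _.
    by have := h j I; rewrite /= in_itv /= -ler_pdivrMr.
  exact: (hind B (fun j => `]-oo, c * x j]%classic) mB (fun j => @measurable_itv R _)).
have hfull := indep_ext d T R P Z Mp mZ mMp hindc.
have hprod := prod_eq d T R P Mf Zf Phif (fun t => erefl) hfull.
have hZ0 : P (Z @^-1` `]-oo, 0]) = 0%E.
  have le z : 0 < z -> (P (Z @^-1` `]-oo, 0%R]) <= z%:E)%E.
    move=> z0.
    have sub : Z @^-1` `]-oo, 0] `<=` Z @^-1` `]-oo, z].
      by move=> t /=; rewrite !in_itv /= => h; lra.
    apply: (le_trans (le_measure _ (mem_set (mZc 0)) (mem_set (mZc z)) sub)).
    apply: (@le_trans _ _ (expR (- z^-1))%:E); first by rewrite -(hZ z z0).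
    rewrite lee_fin.
    rewrite expRN -[leRHS]invrK lef_pV2 ?posrE ?expR_gt0 ?invr_gt0 //.
    by apply: le_trans (expR_ge1Dx _); lra.
  have fz := fin_num_measure P _ (mZc 0).
  move: le; rewrite -(fineK fz) => le.
  apply/eqP; rewrite eq_le; apply/andP; split; last first.
    by rewrite fineK// measure_ge0.
  rewrite lee_fin leNgt; apply/negP => r0.
  have two : (0:R) < 2 by lra.
  have := le _ (divr_gt0 r0 two); rewrite lee_fin; lra.
have hPn (n : nat) : (0 < n)%N ->
    fine (P [set t | forall j, A j t * Z t <= n%:R * x j]) =
    Rintegral P setT (fun t => expR (- Mp t / n%:R)).
  move=> n0.
  have np : (0 : R) < n%:R by rewrite ltr0n.
  set E := [set t | forall j, A j t * Z t <= n%:R * x j].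
  pose N := Z @^-1` `]-oo, 0%R].
  pose S := [set p : R * R | p.2 * p.1 <= n%:R].
  pose F := Phif @^-1` S.
  have mS : measurable S.
    have mf : measurable_fun setT (fun p : R * R => p.2 * p.1).
      by apply: measurable_funM; [exact: measurable_snd|exact: measurable_fst].
    have -> : S = setT `&` (fun p : R * R => p.2 * p.1) @^-1` `]-oo, n%:R].
      by rewrite setTI; apply/seteqP; split => p /=; rewrite in_itv /=.
    by apply: mf => //; exact: measurable_itv.
  have mF : measurable F.
    have := mPhi measurableT S mS; rewrite setTI; exact.
  have mE : measurable E.
    pose V t := \big[Num.max/0]_(j < m) (A j t * Z t - n%:R * x j).
    have mV : measurable_fun setT V.
      apply: mbigmax => j; apply: measurable_funB; last exact: measurable_cst.
      exact: measurable_funM.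
    have -> : E = setT `&` V @^-1` `]-oo, 0%R].
      rewrite setTI; apply/seteqP; split => t /=; rewrite in_itv /=.
        by move=> h; apply/bigmax_leP; split => // j _; rewrite subr_le0.
      by move/bigmax_leP => [_ h] j; rewrite -subr_le0; exact: h.
    by apply: mV => //; exact: measurable_itv.
  have key t : 0 < Z t -> (forall j, A j t * Z t <= n%:R * x j) <-> Z t * Mp t <= n%:R.
    move=> zt; rewrite mulrC -ler_pdivlMr //.
    split => [h|/bigmax_leP [_ h] j].
      apply/bigmax_leP; split; first by rewrite divr_ge0 ?ltW.
      by move=> j _; rewrite ler_pdivlMr // mulrAC ler_pdivrMr //; exact: h j.
    by have := h j isT; rewrite ler_pdivlMr // mulrAC ler_pdivrMr.
  have EF : E `|` N = F `|` N.
    apply/seteqP; split => t /=; rewrite /N /F /S /= in_itv /=;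
      (have [z0|z0] := leP (Z t) 0; first by right).
      by case=> // h; left; apply/key.
    by case=> // h; left; apply/key.
  have PE : P E = P F.
    transitivity (P (E `|` N)); first by rewrite (measureU0 mE (mZc 0) hZ0).
    by rewrite EF (measureU0 mF (mZc 0) hZ0).
  rewrite PE; congr fine.
  etransitivity; first exact: (hprod S mS).
  exact: (prod_S d T R P Mf Zf n%:R np hM0 hZ).
apply: (limit_part R (fun n => fine (P [set t | forall j, A j t * Z t <= n%:R * x j]))).
have h := dct_part d T R P Mp mMp hM0 iM.
apply: (cvg_trans _ h).
apply: near_eq_cvg; near=> n => /=.
by rewrite hPn //; near: n; exists 1%N.
Unshelve. all: by end_near.
Qed.
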